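(* For every positive integer $k$, the $k\times k$ grid graph $R_k$ satisfies $\tau(R_k)=\nu(R_k)=k$.
   Context: $R_k$ is the planar grid graph with vertex set $\{1,\dots,k\}^2$ in which $(i,j)$ and $(i',j')$ are adjacent iff $|i-i'|+|j-j'|=1$. Thicket of $G=(V,E)$: a finite collection $\mathcal H$ of nonempty subsets of $V$ each inducing a connected subgraph and pairwise intersecting; $\tau(\mathcal H)$ is the minimum size of a set meeting every member, and the thicket number $\tau(G)$ is the maximum of $\tau(\mathcal H)$ over all thickets. Vine decomposition: a tree $T$ with labels $V_t\subseteq V$ such that for each vertex $v$ the set $T_v=\{t:v\in V_t\}$ is nonempty and connected in $T$, and for each edge $uv$, $T_u$ and $T_v$ share a node or contain nodes adjacent in $T$; width $\max_t|V_t|$; vinewidth $\nu(G)$ is the minimum width. *)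

(* Defs.v *)
From mathcomp Require Import all_boot.
Set Implicit Arguments. Unset Strict Implicit. Unset Printing Implicit Defensive.

Section Graphs.
Variable V : finType.

Definition induced (e : rel V) (A : {set V}) : rel V :=
  [rel x y | [&& x \in A, y \in A & e x y]].

Definition connected_in (e : rel V) (A : {set V}) : bool :=
  [forall x in A, forall y in A, connect (induced e A) x y].

Definition simple_graph (e : rel V) : Prop := symmetric e /\ irreflexive e.

Definition thicket (e : rel V) (H : {set {set V}}) : bool :=
  [forall A in H, (A != set0) && connected_in e A] &&
  [forall A in H, forall B in H, A :&: B != set0].

Definition hits (H : {set {set V}}) (X : {set V}) : bool :=
  [forall A in H, A :&: X != set0].

(* tau(H): minimum size of a set meeting every member of H
   (default #|V| if no such set exists, which never happens for thickets) *)
Definition tau_fam (H : {set {set V}}) : nat :=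
  \big[minn/#|V|]_(X : {set V} | hits H X) #|X|.

Definition thicket_number (e : rel V) : nat :=
  \max_(H : {set {set V}} | thicket e H) tau_fam H.

End Graphs.

Definition is_tree (T : finType) (eT : rel T) : Prop :=
  [/\ 0 < #|T|, simple_graph eT,
      (forall x y : T, connect eT x y) &
      (forall c : seq T, uniq c -> 2 < size c -> ~~ cycle eT c)].

Definition vine_decomposition (V : finType) (e : rel V)
    (T : finType) (eT : rel T) (lab : T -> {set V}) : Prop :=
  [/\ is_tree eT,
      (forall v : V, [set t | v \in lab t] != set0),
      (forall v : V, connected_in eT [set t | v \in lab t]) &
      (forall u v : V, e u v ->
         (exists t, (u \in lab t) && (v \in lab t)) \/
         (exists t t', [&& u \in lab t, v \in lab t' & eT t t']))].

Definition vine_width (V : finType) (T : finType) (lab : T -> {set V}) : nat :=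
  \max_(t : T) #|lab t|.

Definition vinewidth_is (V : finType) (e : rel V) (w : nat) : Prop :=
  (exists (T : finType) (eT : rel T) (lab : T -> {set V}),
      vine_decomposition e eT lab /\ vine_width lab = w) /\
  (forall (T : finType) (eT : rel T) (lab : T -> {set V}),
      vine_decomposition e eT lab -> w <= vine_width lab).

(* vertices (i,j) with 0 <= i,j < k (a relabelling of {1..k}^2) *)
Definition nat_dist (m n : nat) : nat := (m - n) + (n - m).

Definition grid (k : nat) : rel ('I_k * 'I_k)%type :=
  [rel x y : 'I_k * 'I_k | nat_dist x.1 y.1 + nat_dist x.2 y.2 == 1].
Arguments grid k : clear implicits.

(* Main.v *)
Require Import Defs.
From mathcomp Require Import all_boot zify.
Set Implicit Arguments. Unset Strict Implicit. Unset Printing Implicit Defensive.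

Section General.
Variable (T : finType) (e : rel T).

Lemma induced_sub (A B : {set T}) x y : A \subset B ->
  connect (induced e A) x y -> connect (induced e B) x y.
Proof.
move=> AB; apply: connect_sub => u v /= /and3P[uA vA euv].
by apply: connect1; rewrite /induced /= (subsetP AB _ uA) (subsetP AB _ vA) euv.
Qed.

Lemma induced_symm : symmetric e -> forall A, symmetric (induced e A).
Proof.
move=> se A x y; rewrite /induced /= se.
by case: (x \in A); case: (y \in A).
Qed.

Lemma cind_sym (se : symmetric e) A x y :
  connect (induced e A) x y -> connect (induced e A) y x.
Proof. by rewrite (sym_connect_sym (induced_symm se A)). Qed.

Lemma path_removed (S : {set T}) l x p : path (induced e S) x p -> x != l -> l \notin p ->
  path (induced e (S :\ l)) x p.
Proof.
elim: p x => //= a p IH x /andP[/and3P[xS aS exa] pP] xl.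
rewrite inE negb_or => /andP[la lp].
rewrite /induced /= !in_setD1 xl xS (eq_sym a) la aS exa /=; apply: IH => //; by rewrite eq_sym.
Qed.

Lemma remove_leaf (se : symmetric e) (S : {set T}) l : l \in S ->
  (forall y z, y \in S -> z \in S -> e l y -> e l z -> y = z) ->
  connected_in e S -> connected_in e (S :\ l).
Proof.
move=> lS uniqN /forallP cS; apply/forallP => x; apply/implyP => xS'.
apply/forallP => y; apply/implyP => yS'.
move: (xS') (yS'); rewrite !in_setD1 => /andP[xl xS] /andP[yl yS].
have := cS x; rewrite xS => /forallP/(_ y); rewrite yS /= => /connectP[p pP ey].
move: yl; rewrite ey; case: (shortenP pP) => p' pP' up' _ yl.
apply/connectP; exists p' => //; apply: path_removed => //.
apply/negP => lp; move: pP' up' yl; case/splitPr: lp => p1 p2.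
rewrite cat_path last_cat /= => /andP[_].
case: p2 => [|z p3] /=; first by rewrite eqxx.
move=> /and3P[/and3P[wS _ ewl] /and3P[_ zS elz] _].
move=> /andP[xn]; rewrite cat_uniq => /and3P[_ hn _] _.
have wz : last x p1 = z by apply: uniqN => //; rewrite se.
have := mem_last x p1; rewrite wz inE => /orP[/eqP zx| zp1].
  by move: xn; rewrite -zx mem_cat !inE eqxx !orbT.
move/hasPn: hn => /(_ z); rewrite !inE eqxx orbT /= => /(_ isT).
by rewrite zp1.
Qed.


Section Tree.
Hypothesis se : symmetric e.
Hypothesis irr : irreflexive e.
Hypothesis acyc : forall c : seq T, uniq c -> 2 < size c -> ~~ cycle e c.

Lemma no_chord x p1 y p2 : path e x (p1 ++ y :: p2) -> e x y ->
  uniq (x :: p1 ++ y :: p2) -> p1 = [::].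
Proof.
move=> pP exy up; case: p1 pP up => [//|b p1] pP up.
have uc : uniq (x :: rcons (b :: p1) y).
  move: up; set q := b :: p1; rewrite -cats1 -cat_cons -(cat_cons x q) => up.
  apply: subseq_uniq up; apply: cat_subseq (subseq_refl _) _.
  by rewrite sub1seq mem_head.
have cc : cycle e (x :: rcons (b :: p1) y).
  rewrite /= rcons_path last_rcons (se y) exy andbT -cats1 cat_path /= andbT.
  by move: pP; rewrite /= cat_path /= => /and3P[-> -> /andP[-> _]].
by move: (acyc uc); rewrite cc /= size_rcons => /(_ isT).
Qed.

Lemma induced_subrel (A : {set T}) : subrel (induced e A) e.
Proof. by move=> x y /and3P[]. Qed.

Lemma leaf_exists (U : {set T}) : 1 < #|U| -> connected_in e U ->
  exists l p, [/\ l \in U, p \in U, e l p & forall y, y \in U -> e l y -> y = p].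
Proof.
move=> U2 cU.
have /set0Pn[u uU] : U != set0 by rewrite -card_gt0 ltnW.
suff: forall n x s, #|T| - size s <= n -> x \in U -> path (induced e U) x s ->
    uniq (x :: s) -> exists l p,
    [/\ l \in U, p \in U, e l p & forall y, y \in U -> e l y -> y = p].
  by move=> /(_ #|T| u [::]); apply => //; rewrite subn0.
elim=> [|n IH] x s hn xU pP us;
  have hs : size (x :: s) <= #|T| by rewrite -(card_uniqP us) max_card.
  by move: hn hs => /=; lia.
case: (boolP [exists y, [&& y \in U, e x y & y \notin x :: s]]).
  move=> /existsP[y /and3P[yU exy yn]].
  apply: (IH y (x :: s)) => //=; first by move: hn hs => /=; lia.
    by rewrite /induced /= yU xU se exy pP.
  by move: us; rewrite /= yn.
move=> /existsPn nn.
have nb : forall y, y \in U -> e x y -> y \in s.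
  move=> y yU exy; move: (nn y); rewrite yU exy /= negbK inE => /orP[/eqP yx|//].
  by move: exy; rewrite yx irr.
have nh : forall y, y \in U -> e x y -> y = head x s.
  move=> y yU exy; move: pP us; case/splitPr: (nb y yU exy) => p1 p2 pP us.
  by rewrite (no_chord (sub_path (@induced_subrel U) pP) exy us).
have [q0 q0U xq0] : exists2 q0, q0 \in U & e x q0.
  have : 0 < #|U :\ x| by move: U2; rewrite (cardsD1 x U) xU; lia.
  rewrite card_gt0 => /set0Pn[w]; rewrite in_setD1 => /andP[wx wU].
  move: cU => /forallP/(_ x); rewrite xU => /forallP/(_ w); rewrite wU /=.
  case/connectP => [[|q q'] /=]; first by move=> _ /eqP; rewrite (negbTE wx).
  by case/andP => /and3P[_ qU xq] _ _; exists q.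
move: pP nh (nb q0 q0U xq0); case: s {us hn hs nn nb} => [//|a s'] /= /andP[/and3P[_ aU xa] _] nh _.
by exists x, a; split.
Qed.

Lemma helly n : forall (U : {set T}) (F : {set {set T}}), #|U| <= n ->
  U != set0 -> connected_in e U ->
  (forall S, S \in F -> [&& S != set0, S \subset U & connected_in e S]) ->
  (forall S R, S \in F -> R \in F -> S :&: R != set0) ->
  exists t, forall S, S \in F -> t \in S.
Proof.
elim: n => [|n IH] U F hU Un cU hF hI.
  by move: Un; rewrite -card_gt0; lia.
case: (leqP #|U| 1) => U1.
  have /cards1P[u Uu] : #|U| == 1 by rewrite eqn_leq U1 card_gt0 Un.
  exists u => S SF; have /and3P[Sn SU _] := hF S SF.
  by move: SU; rewrite Uu subset1 (negbTE Sn) orbF => /eqP ->; exact: set11.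
have [l [p [lU pU elp uq]]] := leaf_exists U1 cU.
case: (boolP ([set l] \in F)) => lF.
  exists l => S SF; have := hI _ _ lF SF; case/set0Pn => z.
  by rewrite in_setI => /andP[/set1P -> ].
have Snl : forall S, S \in F -> S :\ l != set0.
  move=> S SF; apply/negP; rewrite setD_eq0 subset1 => /orP[/eqP Sl|/eqP S0].
    by move: lF; rewrite -Sl SF.
  by have /and3P[] := hF S SF; rewrite S0 eqxx.
have pS : forall S, S \in F -> l \in S -> p \in S.
  move=> S SF lS; have /and3P[_ SU cS] := hF S SF.
  have /set0Pn[w] := Snl S SF; rewrite in_setD1 => /andP[wl wS].
  move: cS => /forallP/(_ l); rewrite lS => /forallP/(_ w); rewrite wS /=.
  case/connectP => [[|q q'] /=]; first by move=> _ /eqP; rewrite (negbTE wl).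
  case/andP => /and3P[_ qS lq] _ _.
  by rewrite -(uq q (subsetP SU _ qS) lq).
have uqU : forall y z, y \in U -> z \in U -> e l y -> e l z -> y = z.
  by move=> y z yU zU ly lz; rewrite (uq y yU ly) (uq z zU lz).
have [t Ht] : exists t, forall S', S' \in [set S :\ l | S in F] -> t \in S'.
  apply: (IH (U :\ l)).
  - by move: hU U1; rewrite (cardsD1 l U) lU; lia.
  - apply/set0Pn; exists p; rewrite in_setD1 pU andbT.
    by apply/negP => /eqP pl; move: elp; rewrite pl irr.
  - exact: remove_leaf.
  - move=> S' /imsetP[S SF ->]; have /and3P[_ SU cS] := hF S SF.
    rewrite Snl //= setSD //=.
    case: (boolP (l \in S)) => lS.
      apply: remove_leaf => // y z yS zS; apply: uqU; exact: (subsetP SU).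
    suff -> : S :\ l = S by [].
    by apply/setP => z; rewrite in_setD1; case: eqP => // ->; rewrite (negbTE lS).
  - move=> S' R' /imsetP[S SF ->] /imsetP[R RF ->].
    have /set0Pn[z] := hI S R SF RF; rewrite in_setI => /andP[zS zR].
    apply/set0Pn; case: (eqVneq z l) => [zl|zl].
      have pl : p != l by apply/negP => /eqP pl; move: elp; rewrite pl irr.
      by exists p; rewrite !in_setI !in_setD1 pl !pS // -zl.
    by exists z; rewrite !in_setI !in_setD1 zl zS zR.
exists t => S SF; have := Ht (S :\ l) (imset_f _ SF).
by rewrite in_setD1 => /andP[].
Qed.

End Tree.
End General.

Lemma bigmin_le (I : finType) (P : pred I) (F : I -> nat) m i0 : P i0 ->
  \big[minn/m]_(i | P i) F i <= F i0.
Proof.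
move=> Pi0; have : i0 \in index_enum I by rewrite mem_index_enum.
elim: (index_enum I) => [//|x r IH]; rewrite big_cons inE.
case/orP => [/eqP <-|ir]; first by rewrite Pi0 geq_minl.
case: (P x); last exact: IH.
by apply: leq_trans (geq_minr _ _) (IH ir).
Qed.

Lemma tau_le_width (V : finType) (e : rel V) (T : finType) (eT : rel T)
  (lab : T -> {set V}) (H : {set {set V}}) :
  thicket e H -> vine_decomposition e eT lab -> tau_fam H <= vine_width lab.
Proof.
move=> /andP[/forallP hc /forallP hi] [[T0 [se irr] conn acyc] nonemp Tvc edges].
pose TA := fun A : {set V} => [set t | lab t :&: A != set0].
have Tv_sub : forall v (A : {set V}), v \in A -> [set t | v \in lab t] \subset TA A.
  move=> v A vA; apply/subsetP => t; rewrite !inE => vt.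
  by apply/set0Pn; exists v; rewrite in_setI vt vA.
have L1 : forall (A : {set V}) v t t', v \in A -> v \in lab t -> v \in lab t' ->
    connect (induced eT (TA A)) t t'.
  move=> A v t t' vA vt vt'; apply: (induced_sub (Tv_sub v A vA)).
  move: (Tvc v) => /forallP/(_ t); rewrite inE vt => /forallP/(_ t').
  by rewrite inE vt'.
have L2 : forall (A : {set V}) u v t t', u \in A -> v \in A -> e u v -> u \in lab t ->
    v \in lab t' -> connect (induced eT (TA A)) t t'.
  move=> A u v t t' uA vA euv ut vt'.
  case: (edges u v euv) => [[t0 /andP[ut0 vt0]]|[t0 [t1 /and3P[ut0 vt1 e01]]]].
    exact: connect_trans (L1 A u t t0 uA ut ut0) (L1 A v t0 t' vA vt0 vt').
  apply: connect_trans (L1 A u t t0 uA ut ut0) _.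
  apply: connect_trans _ (L1 A v t1 t' vA vt1 vt').
  apply: connect1; rewrite /induced /= e01 andbT !inE.
  by apply/andP; split; apply/set0Pn; [exists u | exists v]; rewrite in_setI ?ut0 ?vt1 ?uA ?vA.
have TAc : forall (A : {set V}), connected_in e A -> connected_in eT (TA A).
  move=> A cA; apply/forallP => t1; apply/implyP; rewrite inE => /set0Pn[v1].
  rewrite in_setI => /andP[v1l v1A]; apply/forallP => t2; apply/implyP.
  rewrite inE => /set0Pn[v2]; rewrite in_setI => /andP[v2l v2A].
  move: cA => /forallP/(_ v1); rewrite v1A => /forallP/(_ v2); rewrite v2A /=.
  case/connectP => p pP ev2; rewrite ev2 {v2 ev2 v2A} in v2l.
  elim: p v1 t1 v1A v1l pP v2l => [|w p IH] v1 t1 v1A v1l /=.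
    by move=> _ v2l; exact: L1 v1A v1l v2l.
  case/andP => /and3P[_ wA evw] pP.
  have /set0Pn[tw] := nonemp w; rewrite inE => wtw.
  move=> v2l; exact: connect_trans (L2 A v1 w t1 tw v1A wA evw v1l wtw) (IH w tw wA wtw pP v2l).
have [t Ht] : exists t, forall S, S \in [set TA A | A in H] -> t \in S.
  apply: (@helly T eT se irr acyc #|T| setT) => //.
  - by rewrite cardsT.
  - by rewrite -card_gt0 cardsT.
  - apply/forallP => x; apply/implyP => _; apply/forallP => y; apply/implyP => _.
    by rewrite (@eq_connect _ _ eT) // => a b; rewrite /induced /= !in_setT.
  - move=> S /imsetP[A AH ->]; rewrite subsetT TAc ?andbT; last first.
      by move: (hc A); rewrite AH => /andP[].
    move: (hc A); rewrite AH => /andP[/set0Pn[v vA] _].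
    have /set0Pn[tv] := nonemp v; rewrite inE => vt.
    by apply/set0Pn; exists tv; rewrite inE; apply/set0Pn; exists v; rewrite in_setI vt vA.
  - move=> S R /imsetP[A AH ->] /imsetP[B BH ->].
    move: (hi A); rewrite AH => /forallP/(_ B); rewrite BH /= => /set0Pn[v].
    rewrite in_setI => /andP[vA vB].
    have /set0Pn[tv] := nonemp v; rewrite inE => vt.
    apply/set0Pn; exists tv; rewrite in_setI !inE.
    by apply/andP; split; apply/set0Pn; exists v; rewrite in_setI vt ?vA ?vB.
have hit : hits H (lab t).
  apply/forallP => A; apply/implyP => AH; have := Ht (TA A) (imset_f _ AH).
  by rewrite inE setIC.
apply: leq_trans (bigmin_le _ _ hit) _.
exact: leq_bigmax.
Qed.


Lemma seq_max (T : eqType) (f : T -> nat) (s : seq T) x0 : x0 \in s ->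
  exists2 m, m \in s & forall y, y \in s -> f y <= f m.
Proof.
elim: s x0 => [//|a s IH] x0 _.
case: s IH => [|b s] IH.
  by exists a => [|y]; rewrite ?mem_head // inE => /eqP ->.
have [m ms hm] := IH b (mem_head _ _).
case: (leqP (f a) (f m)) => h.
  exists m; first by rewrite inE ms orbT.
  by move=> y; rewrite inE => /orP[/eqP ->|]; [|apply: hm].
exists a; first exact: mem_head.
move=> y; rewrite inE => /orP[/eqP ->//|/hm]; lia.
Qed.

Definition pe (N : nat) : rel 'I_N := [rel a b : 'I_N | (a.+1 == b :> nat) || (b.+1 == a :> nat)].

Arguments pe N : clear implicits.

Lemma pe_sym N : symmetric (pe N).
Proof. by move=> a b; rewrite /pe /= orbC. Qed.

Lemma pe_irr N : irreflexive (pe N).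
Proof. move=> a; rewrite /pe /= orbb; apply/negP => /eqP; lia. Qed.

Lemma pe_acyc N : forall c : seq 'I_N, uniq c -> 2 < size c -> ~~ cycle (pe N) c.
Proof.
move=> c uc sc; apply/negP => cc.
have [x0 x0c] : exists x0, x0 \in c by case: c sc {uc cc} => // x0 c _; exists x0; rewrite mem_head.
have [m mc hm] := seq_max (fun x : 'I_N => val x) x0c.
case: (rot_to mc) => i s' es.
move: uc cc sc; rewrite -(rot_uniq i) -(rot_cycle i) -(size_rot i) es.
have hm' : forall y, y \in m :: s' -> y <= m by move=> y; rewrite -es mem_rot; apply: hm.
case: s' es hm' => [|a [|b s]] // es hm' uc /= cc _.
move: cc => /and3P[ema _]; rewrite rcons_path => /andP[_ elm].
have ha : a <= m by apply: hm'; rewrite !inE eqxx orbT.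
have hb : last b s \in b :: s by exact: mem_last.
have hl : last b s <= m by apply: hm'; rewrite inE (in_cons a) hb !orbT.
have eq1 : a = last b s :> nat.
  move: ema elm ha hl; set lb := last b s.
  rewrite /pe /= => /orP[/eqnP|/eqnP] h1 /orP[/eqnP|/eqnP] h2; lia.
move: uc => /= /and3P[_ an _].
by move: an; rewrite (ord_inj eq1) hb.
Qed.


Lemma chain_connect (T : finType) (e : rel T) (A : {set T}) (f : nat -> T) N :
  (forall m, m < N -> e (f m) (f m.+1)) -> (forall m, m <= N -> f m \in A) ->
  forall m, m <= N -> connect (induced e A) (f 0) (f m).
Proof.
move=> he hA; elim=> [|m IH] hm; first exact: connect0.
apply: connect_trans (IH (ltnW hm)) (connect1 _).
by rewrite /induced /= !hA ?he // ltnW.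
Qed.

Lemma pe_convex M (S : {set 'I_M.+1}) :
  (forall a b c : 'I_M.+1, a \in S -> c \in S -> a <= b -> b <= c -> b \in S) ->
  connected_in (pe M.+1) S.
Proof.
move=> cv.
have key : forall a b : 'I_M.+1, a \in S -> b \in S -> a <= b ->
    connect (induced (pe M.+1) S) a b.
  move=> a b aS bS ab.
  pose f m : 'I_M.+1 := inord (a + m).
  have f0 : f 0 = a by rewrite /f addn0 inord_val.
  have fN : f (b - a) = b by rewrite /f subnKC // inord_val.
  rewrite -f0 -fN; apply: (@chain_connect _ _ _ f (b - a)) => // m hm.
    rewrite /pe /f /= !inordK; first by rewrite addnS eqxx.
      by move: (ltn_ord b) hm; lia.
    by move: (ltn_ord b) hm; lia.
  move: (ltn_ord b) => hb; apply: (cv a _ b aS bS); rewrite /f inordK; lia.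
apply/forallP => a; apply/implyP => aS; apply/forallP => b; apply/implyP => bS.
case: (leqP a b) => ab; first exact: key.
apply: (cind_sym (@pe_sym _)); apply: key => //; exact: ltnW.
Qed.

Lemma pe_connect M (x y : 'I_M.+1) : connect (pe M.+1) x y.
Proof.
have : connected_in (pe M.+1) setT by apply: pe_convex => a b c; rewrite !in_setT.
rewrite /connected_in => /forallP/(_ x); rewrite in_setT => /forallP/(_ y); rewrite in_setT /=.
apply: connect_sub => u v h; apply: connect1; exact: (induced_subrel h).
Qed.


Section Grid.
Variable n : nat.
Local Notation k := n.+1.
Local Notation V := ('I_k * 'I_k)%type.

Definition cross (i j : 'I_k) : {set V} := [set x | (x.1 == i) || (x.2 == j)].
Definition crosses : {set {set V}} := [set cross ij.1 ij.2 | ij in [set: V]].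

Lemma grid_sym : symmetric (grid k).
Proof. move=> x y; rewrite /grid /nat_dist /=; apply/eqP/eqP; lia. Qed.

Lemma row_conn (A : {set V}) (i : 'I_k) : (forall y, (i, y) \in A) ->
  forall y y', connect (induced (grid k) A) (i, y) (i, y').
Proof.
move=> hA.
have h : forall y : 'I_k, connect (induced (grid k) A) (i, inord 0) (i, y).
  move=> y; have -> : (i, y) = (fun m : nat => (i, inord m : 'I_k)) y by rewrite inord_val.
  apply: (@chain_connect _ (grid k) A (fun m : nat => (i, inord m)) n).
  - move=> m hm; rewrite /grid /nat_dist /= !inordK; lia.
  - by move=> m _.
  - by rewrite -ltnS ltn_ord.
move=> y y'; exact: connect_trans (cind_sym grid_sym (h y)) (h y').
Qed.

Lemma col_conn (A : {set V}) (j : 'I_k) : (forall x, (x, j) \in A) ->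
  forall x x', connect (induced (grid k) A) (x, j) (x', j).
Proof.
move=> hA.
have h : forall x : 'I_k, connect (induced (grid k) A) (inord 0, j) (x, j).
  move=> x; have -> : (x, j) = (fun m : nat => (inord m : 'I_k, j)) x by rewrite inord_val.
  apply: (@chain_connect _ (grid k) A (fun m : nat => (inord m, j)) n).
  - move=> m hm; rewrite /grid /nat_dist /= !inordK; lia.
  - by move=> m _.
  - by rewrite -ltnS ltn_ord.
move=> x x'; exact: connect_trans (cind_sym grid_sym (h x)) (h x').
Qed.

Lemma cross_conn i j : connected_in (grid k) (cross i j).
Proof.
have hc : forall x, x \in cross i j -> connect (induced (grid k) (cross i j)) x (i, j).
  case=> a b; rewrite inE /= => /orP[/eqP ->|/eqP ->].
    by apply: row_conn => y; rewrite inE eqxx.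
  by apply: col_conn => x; rewrite inE eqxx orbT.
apply/forallP => x; apply/implyP => xc; apply/forallP => y; apply/implyP => yc.
exact: connect_trans (hc x xc) (cind_sym grid_sym (hc y yc)).
Qed.

Lemma crosses_thicket : thicket (grid k) crosses.
Proof.
apply/andP; split; apply/forallP => A; apply/implyP => /imsetP[[i j] _ ->] /=.
  rewrite cross_conn andbT; apply/set0Pn; exists (i, j); by rewrite inE eqxx.
apply/forallP => B; apply/implyP => /imsetP[[i' j'] _ ->] /=.
by apply/set0Pn; exists (i, j'); rewrite in_setI !inE /= !eqxx orbT.
Qed.

Lemma cross_hit (X : {set V}) : hits crosses X -> k <= #|X|.
Proof.
move=> hX; rewrite leqNgt; apply/negP => small.
have [i _ ni] : exists2 i, i \in [set: 'I_k] & i \notin [set x.1 | x in X].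
  apply/subsetPn; apply/negP => sub; move: (subset_leq_card sub).
  rewrite cardsT card_ord => h; move: (leq_trans h (leq_imset_card _ _)) => h2; have := leq_ltn_trans h2 small; by rewrite ltnn.
have [j _ nj] : exists2 j, j \in [set: 'I_k] & j \notin [set x.2 | x in X].
  apply/subsetPn; apply/negP => sub; move: (subset_leq_card sub).
  rewrite cardsT card_ord => h; move: (leq_trans h (leq_imset_card _ _)) => h2; have := leq_ltn_trans h2 small; by rewrite ltnn.
move: hX => /forallP/(_ (cross i j)).
have -> : cross i j \in crosses by apply/imsetP; exists (i, j); rewrite ?in_setT.
move=> /= /set0Pn[z]; rewrite in_setI inE => /andP[/orP[/eqP zi|/eqP zj] zX].
  by move: ni; rewrite -zi imset_f.
by move: nj; rewrite -zj imset_f.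
Qed.

Lemma tau_crosses : k <= tau_fam crosses.
Proof.
rewrite /tau_fam; apply: (big_ind (fun m => k <= m)).
- by rewrite card_prod card_ord leq_pmulr.
- by move=> a b ha hb; rewrite leq_min ha hb.
- move=> X hX; exact: cross_hit.
Qed.

Definition idx (x : V) : nat := x.1 * k + x.2.

Lemma idx_lt x : idx x < k * k.
Proof. case: x => a b; rewrite /idx /=; move: (ltn_ord a) (ltn_ord b); nia. Qed.

Lemma idx_inj : injective idx.
Proof.
move=> [a b] [c d]; rewrite /idx /= => h.
have : (a * k + b) %/ k = (c * k + d) %/ k by rewrite h.
rewrite !divnMDl // !divn_small // !addn0 => ac.
have : (a * k + b) %% k = (c * k + d) %% k by rewrite h.
rewrite !modnMDl !modn_small // => bd.
by congr pair; apply: ord_inj.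
Qed.

Definition M := k * k - k.
Definition lab (t : 'I_M.+1) : {set V} := [set x | (t <= idx x) && (idx x < t + k)].

Lemma width_bound t : #|lab t| <= k.
Proof.
pose g (x : V) : 'I_k := inord (idx x - t).
rewrite -(@card_in_imset _ _ g); first by rewrite -[X in _ <= X]card_ord max_card.
move=> x y; rewrite !inE => /andP[hx1 hx2] /andP[hy1 hy2] /(congr1 val).
rewrite /g /= !inordK; [|lia|lia] => h; apply: idx_inj; lia.
Qed.

Lemma vw_le : vine_width lab <= k.
Proof. by apply/bigmax_leqP => t _; exact: width_bound. Qed.

Lemma edge_cases u v : grid k u v ->
  (idx v = (idx u).+1 \/ idx u = (idx v).+1) \/ (idx v = idx u + k \/ idx u = idx v + k).
Proof.
case: u => [u1 u2]; case: v => [v1 v2]; rewrite /grid /nat_dist /idx /= => /eqP h.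
case: (ltngtP u1 v1) => [lt|gt|eq].
- right; have e : (v1 : nat) = u1.+1 by lia.
  have e2 : (v2 : nat) = u2 by lia.
  by rewrite e e2 mulSn; lia.
- right; have e : (u1 : nat) = v1.+1 by lia.
  have e2 : (v2 : nat) = u2 by lia.
  by rewrite e e2 mulSn; lia.
- by left; rewrite eq; rewrite eq in h; lia.
Qed.

Lemma kk_facts : k <= k * k /\ (n = 0 -> k * k = 1).
Proof. by split; [rewrite leq_pmulr | move=> ->]. Qed.

Lemma bags_adj x y : idx y = (idx x).+1 ->
  exists t : 'I_M.+1, (x \in lab t) && (y \in lab t).
Proof.
move=> h; exists (inord (minn (idx x) M)); rewrite !inE h inordK; last first.
  by rewrite /M; lia.
have hy := idx_lt y; rewrite h in hy; have [f1 f2] := kk_facts.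
rewrite /M; case: (posnP n) => [n0|np].
  by move: hy; rewrite f2.
move: hy f1; set K2 := k * k => hy f1.
apply/and3P; split; try lia; apply/andP; split; lia.
Qed.

Lemma bags_vert x y : idx y = idx x + k ->
  exists t t' : 'I_M.+1, [&& x \in lab t, y \in lab t' & pe M.+1 t t'].
Proof.
move=> h; have hy := idx_lt y; rewrite h in hy; have [f1 _] := kk_facts.
move: hy f1; rewrite /M; set K2 := k * k => hy f1.
exists (inord (idx x)), (inord (idx x).+1); rewrite !inE h /pe /= !inordK; try lia.
Qed.

Lemma decomp : vine_decomposition (grid k) (pe M.+1) lab.
Proof.
split.
- split; [by rewrite card_ord | split; [exact: pe_sym | exact: pe_irr] |
    exact: pe_connect | exact: pe_acyc].
- move=> v; apply/set0Pn; have [t /andP[ht _]] : exists t : 'I_M.+1, (v \in lab t) && true.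
    have hv := idx_lt v; have [f1 _] := kk_facts.
    exists (inord (minn (idx v) M)); rewrite andbT !inE inordK; last by rewrite /M; lia.
    move: hv f1; rewrite /M; set K2 := k * k => hv f1; apply/andP; split; lia.
  by exists t; rewrite inE.
- move=> v; apply: pe_convex => a b c; rewrite !inE => /andP[ha1 ha2] /andP[hc1 hc2] ab bc.
  apply/andP; split; lia.
- move=> u v huv; case: (edge_cases huv) => [[h|h]|[h|h]].
  + by left; exact: bags_adj.
  + by left; have [t ht] := bags_adj h; exists t; rewrite andbC.
  + by right; exact: bags_vert.
  + right; have [t [t' /and3P[a b c]]] := bags_vert h.
    by exists t', t; rewrite a b pe_sym c.
Qed.

End Grid.

Unset Implicit Arguments.
Theorem mainTheorem10 (k : nat) (hk : 0 < k) :
  thicket_number (grid k) = k /\ vinewidth_is (grid k) k.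
Proof.
case: k hk => [//|n] _.
have dec := decomp n.
have wle := vw_le n.
have lb : forall (T : finType) (eT : rel T) (lab : T -> {set ('I_n.+1 * 'I_n.+1)%type}),
    vine_decomposition (grid n.+1) eT lab -> n.+1 <= vine_width lab.
  move=> T eT lb' H; exact: leq_trans (tau_crosses n) (tau_le_width (crosses_thicket n) H).
split.
- apply/eqP; rewrite eqn_leq; apply/andP; split.
    apply/bigmax_leqP => H tH; exact: leq_trans (tau_le_width tH dec) wle.
  exact: leq_trans (tau_crosses n) (leq_bigmax_cond _ (crosses_thicket n)).
- split; last exact: lb.
  exists _, (pe (M n).+1), (@lab n); split => //.
  by apply/eqP; rewrite eqn_leq wle (lb _ _ _ dec).
Qed.
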